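(* Assume the vector variational inequality defined by $F$ and $K$ is monotone. (a) If the proper Pareto solution set $\mathrm{Sol}^{pr}(F,K)$ is disconnected, then each connected component of $\mathrm{Sol}^{pr}(F,K)$ is unbounded. (b) If $\mathrm{Sol}^{pr}(F,K)$ is bounded and nonempty, then it is connected.
   Context: Let $K\subset\mathbb{R}^n$ be a nonempty closed convex set and $F_1,\dots,F_m:K\to\mathbb{R}^n$ continuous functions. The problem is monotone if each $F_l$ is monotone on $K$: $\langle F_l(y)-F_l(x),y-x\rangle\ge0$ for all $x,y\in K$. Let $\Delta=\{\xi\in\mathbb{R}^m_+:\sum_l\xi_l=1\}$, $\operatorname{ri}\Delta=\{\xi\in\Delta:\xi_l>0,\ l=1,\dots,m\}$ and $F_\xi=\sum_l\xi_lF_l$. For $G:K\to\mathbb{R}^n$, $\mathrm{Sol}(G,K)=\{x\in K:\langle G(x),y-x\rangle\ge0\ \forall y\in K\}$. The proper Pareto solution set is $\mathrm{Sol}^{pr}(F,K)=\bigcup_{\xi\in\operatorname{ri}\Delta}\mathrm{Sol}(F_\xi,K)$. *)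

(* Defs.v *)
From mathcomp Require Import all_boot.
From Stdlib Require Import Reals.

Set Implicit Arguments.
Unset Strict Implicit.
Unset Printing Implicit Defensive.

Local Open Scope R_scope.

Definition vec (n : nat) := 'I_n -> R.

Definition vadd n (x y : vec n) : vec n := fun i => x i + y i.
Definition vsub n (x y : vec n) : vec n := fun i => x i - y i.
Definition vscale n (t : R) (x : vec n) : vec n := fun i => t * x i.

Definition inner n (x y : vec n) : R := \big[Rplus/0]_(i < n) (x i * y i).
Definition vnorm n (x : vec n) : R := sqrt (inner x x).
Definition vdist n (x y : vec n) : R := vnorm (vsub x y).

Definition nonempty n (S : vec n -> Prop) : Prop := exists x, S x.
Definition subset n (A B : vec n -> Prop) : Prop := forall x, A x -> B x.

Definition is_open n (U : vec n -> Prop) : Prop :=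
  forall x, U x -> exists eps, 0 < eps /\ forall y, vdist x y < eps -> U y.

Definition is_closed n (K : vec n -> Prop) : Prop :=
  forall x, (forall eps, 0 < eps -> exists y, K y /\ vdist x y < eps) -> K x.

Definition is_convex n (K : vec n -> Prop) : Prop :=
  forall x y t, K x -> K y -> 0 <= t <= 1 ->
    K (vadd (vscale t x) (vscale (1 - t) y)).

Definition vbounded n (S : vec n -> Prop) : Prop :=
  exists M, forall x, S x -> vnorm x <= M.

Definition connected n (S : vec n -> Prop) : Prop :=
  ~ exists U V : vec n -> Prop,
      is_open U /\ is_open V /\
      (forall x, S x -> U x \/ V x) /\
      (exists x, S x /\ U x) /\ (exists x, S x /\ V x) /\
      (forall x, S x -> U x -> V x -> False).

Definition conn_component n (C S : vec n -> Prop) : Prop :=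
  nonempty C /\ subset C S /\ connected C /\
  forall D, subset D S -> connected D -> (exists x, C x /\ D x) -> subset D C.

Definition continuous_on n (K : vec n -> Prop) (G : vec n -> vec n) : Prop :=
  forall x, K x -> forall eps, 0 < eps ->
    exists delta, 0 < delta /\
      forall y, K y -> vdist x y < delta -> vdist (G x) (G y) < eps.

Definition monotone_on n (K : vec n -> Prop) (G : vec n -> vec n) : Prop :=
  forall x y, K x -> K y -> 0 <= inner (vsub (G y) (G x)) (vsub y x).

Definition monotone_VVI n m (K : vec n -> Prop) (F : 'I_m -> vec n -> vec n) :=
  forall l, monotone_on K (F l).

Definition ri_simplex m (xi : 'I_m -> R) : Prop :=
  (forall l, 0 < xi l) /\ \big[Rplus/0]_(l < m) xi l = 1.

Definition Fxi n m (F : 'I_m -> vec n -> vec n) (xi : 'I_m -> R) : vec n -> vec n :=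
  fun x i => \big[Rplus/0]_(l < m) (xi l * F l x i).

Definition Sol n (G : vec n -> vec n) (K : vec n -> Prop) : vec n -> Prop :=
  fun x => K x /\ forall y, K y -> 0 <= inner (G x) (vsub y x).

Definition SolPr n m (F : 'I_m -> vec n -> vec n) (K : vec n -> Prop) : vec n -> Prop :=
  fun x => exists xi, ri_simplex xi /\ Sol (Fxi F xi) K x.

(* Main.v *)
Require Import Defs.
From HB Require Import structures.
From mathcomp Require Import all_boot.
From Stdlib Require Import Reals Lra Lia ZArith ClassicalEpsilon Classical FunctionalExtensionality.
From mathcomp Require Import zify.

Set Implicit Arguments.
Unset Strict Implicit.
Unset Printing Implicit Defensive.
Local Open Scope R_scope.

Lemma Rplus_assoc' : associative Rplus. Proof. move=> a b c; ring. Qed.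
Lemma Rmult_assoc' : associative Rmult. Proof. move=> a b c; ring. Qed.
HB.instance Definition _ := Monoid.isComLaw.Build R 0 Rplus Rplus_assoc' Rplus_comm Rplus_0_l.
HB.instance Definition _ := Monoid.isComLaw.Build R 1 Rmult Rmult_assoc' Rmult_comm Rmult_1_l.
HB.instance Definition _ := Monoid.isMulLaw.Build R 0 Rmult Rmult_0_l Rmult_0_r.
HB.instance Definition _ := Monoid.isAddLaw.Build R Rmult Rplus Rmult_plus_distr_r Rmult_plus_distr_l.

Lemma fchoice {A B : Type} (P : A -> B -> Prop) :
  (forall a, exists b, P a b) -> exists f : A -> B, forall a, P a (f a).
Proof.
move=> H. exists (fun a => proj1_sig (constructive_indefinite_description _ (H a))).
move=> a. exact: (proj2_sig (constructive_indefinite_description _ (H a))).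
Qed.

Lemma fchoice_dep {A : Type} {B : A -> Type} (P : forall a, B a -> Prop) :
  (forall a, exists b, P a b) -> exists f : forall a, B a, forall a, P a (f a).
Proof.
move=> H. exists (fun a => proj1_sig (constructive_indefinite_description _ (H a))).
move=> a. exact: (proj2_sig (constructive_indefinite_description _ (H a))).
Qed.

Lemma eps_N eps : 0 < eps -> exists N : nat, / INR (S N) < eps.
Proof.
move=> he. have [h1 _] := archimed (/ eps).
exists (Z.to_nat (up (/ eps))).
have hpos : 0 < / eps by apply: Rinv_0_lt_compat.
have hz : (0 <= up (/ eps))%Z.
  apply: le_IZR; lra.
rewrite S_INR INR_IZR_INZ Z2Nat.id //.
set z := IZR _ in h1 *.
have hp : 0 < z + 1 by lra.
rewrite -(Rinv_inv eps). apply: Rinv_lt_contravar; first by nra.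
lra.
Qed.

Lemma sum_le I (r : seq I) (P : pred I) (f g : I -> R) :
  (forall i, P i -> f i <= g i) ->
  \big[Rplus/0]_(i <- r | P i) f i <= \big[Rplus/0]_(i <- r | P i) g i.
Proof. move=> H; apply: (big_ind2 (fun a b => a <= b)) => //; [lra|]. move=> *; lra. Qed.

Lemma sum_ge0 I (r : seq I) (P : pred I) (f : I -> R) :
  (forall i, P i -> 0 <= f i) -> 0 <= \big[Rplus/0]_(i <- r | P i) f i.
Proof. move=> H; apply: (big_ind (fun a => 0 <= a)) => //; [lra|]. move=> *; lra. Qed.

Lemma sum_cv I (r : seq I) (P : pred I) (f : nat -> I -> R) (l : I -> R) :
  (forall i, P i -> Un_cv (fun k => f k i) (l i)) ->
  Un_cv (fun k => \big[Rplus/0]_(i <- r | P i) f k i) (\big[Rplus/0]_(i <- r | P i) l i).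
Proof.
move=> H; elim: r => [|a r IH].
  rewrite big_nil. have -> : (fun k => \big[Rplus/0]_(i <- [::] | P i) f k i) = fun _ => 0.
    by apply: functional_extensionality => k; rewrite big_nil.
  by move=> e he; exists 0%nat => k _; rewrite /Rdist Rminus_0_r Rabs_R0.
rewrite big_cons.
have -> : (fun k => \big[Rplus/0]_(i <- a :: r | P i) f k i) =
  fun k => (if P a then f k a + \big[Rplus/0]_(i <- r | P i) f k i else \big[Rplus/0]_(i <- r | P i) f k i).
  by apply: functional_extensionality => k; rewrite big_cons.
case Pa: (P a) => //. apply: CV_plus => //. exact: H.
Qed.

Lemma cv_const c : Un_cv (fun _ => c) c.
Proof. by move=> e he; exists 0%nat => k _; rewrite /Rdist Rminus_diag Rabs_R0. Qed.

Definition incr (phi : nat -> nat) := forall k, (phi k < phi (S k))%nat.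

Lemma incr_ge phi : incr phi -> forall k, (k <= phi k)%nat.
Proof. move=> H; elim=> [|k IH]; first lia. have := H k; lia. Qed.

Lemma incr_mono phi : incr phi -> forall a b, (a <= b)%nat -> (phi a <= phi b)%nat.
Proof.
move=> H a b hab. have -> : b = (a + (b - a))%nat by lia.
elim: (b - a)%nat => [|d IH]; first by rewrite addn0.
have := H (a + d)%nat. rewrite addnS. lia.
Qed.

Lemma incr_comp phi psi : incr phi -> incr psi -> incr (fun k => phi (psi k)).
Proof.
move=> H1 H2 k. have := H2 k => h. have := incr_mono H1 h. have := H1 (psi k). lia.
Qed.

Lemma cv_sub u l phi : incr phi -> Un_cv u l -> Un_cv (fun k => u (phi k)) l.
Proof.
move=> Hp H e he. have [N HN] := H e he. exists N => k hk. apply: HN.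
have := incr_ge Hp k. lia.
Qed.

Lemma cv_bound (u : nat -> R) l :
  (forall k, Rabs (u k - l) <= / INR (S k)) -> Un_cv u l.
Proof.
move=> H e he. have [N HN] := eps_N he. exists N => k hk.
rewrite /Rdist. apply: (Rle_lt_trans _ _ _ (H k)). apply: Rle_lt_trans HN.
apply: Rinv_le_contravar; first by apply: lt_0_INR; lia.
apply: le_INR; lia.
Qed.

Lemma Rabs_le_inv' a b : Rabs a <= b -> -b <= a <= b.
Proof. move=> h. split_Rabs; lra. Qed.

Lemma BW1 (u : nat -> R) M : (forall k, Rabs (u k) <= M) ->
  exists phi l, incr phi /\ Un_cv (fun k => u (phi k)) l.
Proof.
move=> HM.
have [l Hl] := @Bolzano_Weierstrass u (fun c => -M <= c <= M) (compact_P3 (-M) M)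
  (fun k => Rabs_le_inv' (HM k)).
have Hg : forall Nk : nat * nat, exists p, (Nk.1 <= p)%nat /\ Rabs (u p - l) < / INR (S Nk.2).
  move=> [N k]. have hpos : 0 < / INR (S k) by apply: Rinv_0_lt_compat; apply: lt_0_INR; lia.
  have [p [hp1 hp2]] := Hl (disc l (mkposreal _ hpos)) N
     (ex_intro _ (mkposreal _ hpos) (fun y h => h)).
  exists p; split; [simpl; lia | exact: hp2].
have [g Hg'] := fchoice Hg.
pose fix phi k := match k with 0 => g (0%nat, 0%nat) | S k' => g (S (phi k'), S k') end.
exists phi, l; split.
  move=> k /=. have [h _] := Hg' (S (phi k), S k). simpl in h. lia.
apply: cv_bound => k. case: k => [|k] /=.
  have [_ h] := Hg' (0%nat, 0%nat). simpl in h. lra.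
have [_ h] := Hg' (S (phi k), S k). simpl in h. lra.
Qed.

Definition vcv p (u : nat -> vec p) (x : vec p) := forall i, Un_cv (fun k => u k i) (x i).
Definition q p (x : vec p) := inner x x.
Definition sclosed p (S : vec p -> Prop) :=
  forall u x, (forall k, S (u k)) -> vcv u x -> S x.

Lemma q_ge0 p (x : vec p) : 0 <= q x.
Proof. apply: sum_ge0 => i _; nra. Qed.

Lemma coord_le_q p (x : vec p) i : x i * x i <= q x.
Proof.
rewrite /q /inner (bigD1 i) //=.
rewrite -[X in X <= _]Rplus_0_r; apply: Rplus_le_compat_l; apply: sum_ge0 => j _; nra.
Qed.

Lemma Rabs_coord p (x : vec p) i : Rabs (x i) <= vnorm x.
Proof.
rewrite /vnorm -sqrt_Rsqr_abs. apply: sqrt_le_1_alt. rewrite /Rsqr. exact: coord_le_q.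
Qed.

Lemma Rabs_coord_dist p (x y : vec p) i : Rabs (x i - y i) <= vdist x y.
Proof. exact: (Rabs_coord (vsub x y) i). Qed.

Lemma vnorm_q p (x : vec p) M : vnorm x <= M -> q x <= M * M.
Proof.
rewrite /vnorm => h. have h0 := q_ge0 x. have hs := sqrt_pos (inner x x).
rewrite /q -(sqrt_sqrt (inner x x)) //. nra.
Qed.

Lemma q_vnorm p (x : vec p) M : 0 <= M -> q x <= M * M -> vnorm x <= M.
Proof. move=> hM h. rewrite /vnorm -(sqrt_square M) //. exact: sqrt_le_1_alt. Qed.

Lemma vcv_q0 p (u : nat -> vec p) x : vcv u x -> Un_cv (fun k => q (vsub x (u k))) 0.
Proof.
move=> H.
have -> : 0 = \big[Rplus/0]_(i < p) ((fun _ => 0) i) by rewrite big1.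
apply: sum_cv => i _. rewrite /vsub.
have -> : 0 = (x i - x i) * (x i - x i) by ring.
apply: CV_mult; apply: CV_minus; by [apply: cv_const | apply: H].
Qed.

Lemma vcv_dist p (u : nat -> vec p) x : vcv u x ->
  forall eps, 0 < eps -> exists N, forall k, (N <= k)%nat -> vdist x (u k) < eps.
Proof.
move=> H e he. have he2 : e * e > 0 by nra.
have [N HN] := vcv_q0 H he2.
exists N => k hk. have := HN k ltac:(rewrite /ge; lia). rewrite /Rdist Rminus_0_r => h.
have h0 := q_ge0 (vsub x (u k)).
rewrite Rabs_pos_eq // in h. rewrite /vdist /vnorm -(sqrt_square e); last lra.
apply: sqrt_lt_1_alt. split => //.
Qed.

Lemma vcv_open p (U : vec p -> Prop) u x : is_open U -> U x -> vcv u x ->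
  exists N, forall k, (N <= k)%nat -> U (u k).
Proof.
move=> hU hx hcv. have [e [he He]] := hU x hx. have [N HN] := vcv_dist hcv he.
exists N => k hk. exact: He (HN k hk).
Qed.

Lemma closed_sclosed p (S : vec p -> Prop) : is_closed S -> sclosed S.
Proof.
move=> hS u x hu hcv. apply: hS => e he. have [N HN] := vcv_dist hcv he.
exists (u N); split => //. exact: HN.
Qed.

Lemma vcv_sub p (u : nat -> vec p) x phi : incr phi -> vcv u x -> vcv (fun k => u (phi k)) x.
Proof. move=> hp H i. exact: (cv_sub hp (H i)). Qed.

Lemma vcv_inner p (a b : nat -> vec p) x y : vcv a x -> vcv b y ->
  Un_cv (fun k => inner (a k) (b k)) (inner x y).
Proof. move=> ha hb. apply: sum_cv => i _. exact: CV_mult. Qed.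

Lemma vcv_vsub p (a b : nat -> vec p) x y : vcv a x -> vcv b y ->
  vcv (fun k => vsub (a k) (b k)) (vsub x y).
Proof. move=> ha hb i. exact: CV_minus. Qed.

Lemma vcv_const p (x : vec p) : vcv (fun _ => x) x.
Proof. move=> i; exact: cv_const. Qed.

Lemma vcv_q p (a : nat -> vec p) x : vcv a x -> Un_cv (fun k => q (a k)) (q x).
Proof. move=> h; exact: vcv_inner. Qed.

Lemma cv_le_lim (u : nat -> R) l c : (forall k, u k <= c) -> Un_cv u l -> l <= c.
Proof. move=> h hu. exact: (Rle_cv_lim h hu (cv_const c)). Qed.

Lemma cv_ge_lim (u : nat -> R) l c : (forall k, c <= u k) -> Un_cv u l -> c <= l.
Proof. move=> h hu. exact: (Rle_cv_lim h (cv_const c) hu). Qed.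

Lemma BWv p (u : nat -> vec p) M : (forall k i, Rabs (u k i) <= M) ->
  exists phi x, incr phi /\ vcv (fun k => u (phi k)) x.
Proof.
move=> HM.
suff: forall s : seq 'I_p, exists phi x, incr phi /\
        forall i, i \in s -> Un_cv (fun k => u (phi k) i) (x i).
  move=> /(_ (enum 'I_p)) [phi [x [h1 h2]]]. exists phi, x; split => // i.
  by apply: h2; rewrite mem_enum.
elim=> [|a s [phi [x [hphi hx]]]].
  exists (fun k : nat => k), (fun _ => 0); split => // k /=; lia.
have [psi [l [hpsi hl]]] := BW1 (fun k => HM (phi k) a).
exists (fun k => phi (psi k)), (fun i => if i == a then l else x i); split.
  exact: incr_comp.
move=> i; rewrite in_cons; case: eqP => [-> _|_ /= hi] //.
exact: (cv_sub hpsi (hx i hi)).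
Qed.

Lemma cont_seq p (S : vec p -> Prop) (G : vec p -> vec p) u x :
  continuous_on S G -> S x -> (forall k, S (u k)) -> vcv u x -> vcv (fun k => G (u k)) (G x).
Proof.
move=> hG hx hu hcv i e he. have [d [hd Hd]] := hG x hx e he.
have [N HN] := vcv_dist hcv hd. exists N => k hk.
rewrite /Rdist Rabs_minus_sym. apply: Rle_lt_trans (Rabs_coord_dist _ _ i) _.
apply: Hd => //. apply: HN. rewrite /ge in hk. lia.
Qed.

Definition sclosedR a b (P : R -> Prop) :=
  forall (u : nat -> R) t, (forall k, a <= u k <= b) -> (forall k, P (u k)) -> Un_cv u t -> P t.

Lemma cv_invN : Un_cv (fun k => / INR (S k)) 0.
Proof.
apply: cv_bound => k. rewrite Rminus_0_r Rabs_pos_eq; first lra.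
apply: Rlt_le; apply: Rinv_0_lt_compat; apply: lt_0_INR; lia.
Qed.

Lemma invN_pos k : 0 < / INR (S k).
Proof. apply: Rinv_0_lt_compat; apply: lt_0_INR; lia. Qed.

Lemma invN_le1 k : / INR (S k) <= 1.
Proof.
rewrite -Rinv_1. apply: Rinv_le_contravar; first lra.
rewrite S_INR. have := pos_INR k. lra.
Qed.

Lemma interval_conn a b (P Q : R -> Prop) : a <= b -> P a -> Q b ->
  (forall t, a <= t <= b -> P t \/ Q t) ->
  (forall t, a <= t <= b -> P t -> Q t -> False) ->
  sclosedR a b P -> sclosedR a b Q -> False.
Proof.
move=> hab hPa hQb hcov hdis hPc hQc.
pose E t := a <= t <= b /\ P t.
have hbd : bound E by exists b => t [[_ h] _].
have [s [hub hlub]] := completeness E hbd (ex_intro _ a (conj (conj (Rle_refl a) hab) hPa)).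
have has : a <= s by apply: hub; split => //; lra.
have hsb : s <= b by apply: hlub => t [[_ h] _].
have Hex : forall k, exists t, E t /\ s - / INR (S k) < t.
  move=> k; apply: NNPP => hn.
  have : s <= s - / INR (S k).
    apply: hlub => t ht. apply: Rnot_lt_le => hlt. apply: hn. by exists t.
  have := invN_pos k. lra.
have [u Hu] := fchoice Hex.
have hPs : P s.
  apply: (hPc u).
  - by move=> k; have [[h _] _] := Hu k.
  - by move=> k; have [[_ h] _] := Hu k.
  apply: cv_bound => k. have [h1 h2] := Hu k. have := hub _ h1.
  move=> h3. rewrite Rabs_left1; lra.
case: (Rle_lt_or_eq_dec _ _ hsb) => hsb'; last first.
  apply: (hdis b _ _ hQb); [lra| by rewrite -hsb'].
pose v k := s + (b - s) * / INR (S k).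
have hv : forall k, s < v k <= b.
  move=> k; rewrite /v. have := invN_pos k. have := invN_le1 k. nra.
apply: (hdis s _ hPs); first lra.
apply: (hQc v).
- move=> k; have := hv k; lra.
- move=> k; have [h|h] := hcov (v k) ltac:(have := hv k; lra) => //.
  have : v k <= s by apply: hub; split => //; have := hv k; lra.
  have := hv k; lra.
- have -> : s = s + (b - s) * 0 by ring.
  apply: CV_plus; first exact: cv_const.
  apply: CV_mult; [exact: cv_const | exact: cv_invN].
Qed.

Lemma sum_lin I (r : seq I) (P : pred I) (f g : I -> R) a b :
  \big[Rplus/0]_(i <- r | P i) (a * f i + b * g i) =
  a * \big[Rplus/0]_(i <- r | P i) f i + b * \big[Rplus/0]_(i <- r | P i) g i.
Proof. by rewrite big_split /= !big_distrr. Qed.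

Lemma sum_lin_ord p (f g : 'I_p -> R) a b :
  \big[Rplus/0]_(i < p) (a * f i + b * g i) =
  a * \big[Rplus/0]_(i < p) f i + b * \big[Rplus/0]_(i < p) g i.
Proof. by rewrite big_split /= !big_distrr. Qed.

Lemma inner_subr p (x y z : vec p) : inner x (vsub y z) = inner x y - inner x z.
Proof.
rewrite /inner /vsub. transitivity (\big[Rplus/0]_(i < p) (1 * (x i * y i) + (-1) * (x i * z i))).
  apply: eq_bigr => i _ /=; ring.
rewrite sum_lin_ord; ring.
Qed.

Lemma inner_subl p (x y z : vec p) : inner (vsub y z) x = inner y x - inner z x.
Proof.
rewrite /inner /vsub. transitivity (\big[Rplus/0]_(i < p) (1 * (y i * x i) + (-1) * (z i * x i))).
  apply: eq_bigr => i _ /=; ring.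
rewrite sum_lin_ord; ring.
Qed.

Lemma inner_addr p (x y z : vec p) : inner x (vadd y z) = inner x y + inner x z.
Proof.
rewrite /inner /vadd. transitivity (\big[Rplus/0]_(i < p) (1 * (x i * y i) + 1 * (x i * z i))).
  apply: eq_bigr => i _ /=; ring.
rewrite sum_lin_ord; ring.
Qed.

Lemma inner_scaler p (x y : vec p) t : inner x (vscale t y) = t * inner x y.
Proof.
rewrite /inner /vscale. transitivity (\big[Rplus/0]_(i < p) (t * (x i * y i) + 0 * (x i * y i))).
  apply: eq_bigr => i _ /=; ring.
rewrite sum_lin_ord; ring.
Qed.

Lemma inner_ext p (x x' y y' : vec p) : (forall i, x i = x' i) -> (forall i, y i = y' i) ->
  inner x y = inner x' y'.
Proof. move=> h1 h2; apply: eq_bigr => i _; by rewrite h1 h2. Qed.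

Section FxiSec.
Variables (n m : nat) (K : vec n -> Prop) (F : 'I_m -> vec n -> vec n).

Lemma Fxi_inner (xi : 'I_m -> R) x y :
  inner (vsub (Fxi F xi y) (Fxi F xi x)) (vsub y x) =
  \big[Rplus/0]_(l < m) (xi l * inner (vsub (F l y) (F l x)) (vsub y x)).
Proof.
rewrite /inner. under [RHS]eq_bigr => l _ do rewrite big_distrr.
rewrite exchange_big /=. apply: eq_bigr => i _.
rewrite /vsub /Fxi. transitivity
  (\big[Rplus/0]_(l < m) (1 * (xi l * F l y i) + (-1) * (xi l * F l x i)) * (y i - x i)).
  by rewrite sum_lin_ord; ring.
rewrite big_distrl /=. apply: eq_bigr => l _; ring.
Qed.

Lemma Fxi_mono xi : (forall l, 0 <= xi l) -> monotone_VVI K F -> monotone_on K (Fxi F xi).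
Proof.
move=> hxi hm x y hx hy. rewrite Fxi_inner. apply: sum_ge0 => l _.
apply: Rmult_le_pos => //. exact: hm.
Qed.

Lemma Fxi_cv (xs : nat -> 'I_m -> R) xi (u : nat -> vec n) x :
  (forall l, continuous_on K (F l)) -> K x -> (forall k, K (u k)) ->
  vcv xs xi -> vcv u x -> vcv (fun k => Fxi F (xs k) (u k)) (Fxi F xi x).
Proof.
move=> hF hx hu hxs hcv i. rewrite /Fxi. apply: sum_cv => l _.
apply: CV_mult; first exact: hxs.
exact: (cont_seq (hF l) hx hu hcv i).
Qed.

Lemma sol_limit (K' : vec n -> Prop) (xs : nat -> 'I_m -> R) xi (u : nat -> vec n) x :
  (forall l, continuous_on K (F l)) -> (forall z, K' z -> K z) -> sclosed K' ->
  (forall k, Sol (Fxi F (xs k)) K' (u k)) -> vcv xs xi -> vcv u x ->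
  Sol (Fxi F xi) K' x.
Proof.
move=> hF hK' hcl hs hxs hcv.
have hx : K' x by apply: (hcl u) => // k; have [h _] := hs k.
split => // y hy.
apply: (cv_ge_lim (u := fun k => inner (Fxi F (xs k) (u k)) (vsub y (u k)))).
  move=> k; have [_ h] := hs k; exact: h.
apply: vcv_inner.
  apply: Fxi_cv => //; [exact: hK' | move=> k; apply: hK'; by have [h _] := hs k].
apply: vcv_vsub => //; exact: vcv_const.
Qed.

End FxiSec.

Definition comb p t (x y : vec p) : vec p := vadd (vscale t x) (vscale (1 - t) y).
Definition seqcont p (S : vec p -> Prop) (G : vec p -> vec p) :=
  forall u x, S x -> (forall k, S (u k)) -> vcv u x -> vcv (fun k => G (u k)) (G x).
Definition Minty p (G : vec p -> vec p) (S : vec p -> Prop) x :=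
  S x /\ forall y, S y -> 0 <= inner (G y) (vsub y x).

Lemma comb_sub p t (y x : vec p) z : inner z (vsub (comb t y x) x) = t * inner z (vsub y x).
Proof.
rewrite -inner_scaler. apply: inner_ext => // i. rewrite /vsub /comb /vadd /vscale. ring.
Qed.

Lemma vcv_comb p (ts : nat -> R) t (y x : vec p) : Un_cv ts t ->
  vcv (fun k => comb (ts k) y x) (comb t y x).
Proof.
move=> h i. rewrite /comb /vadd /vscale. apply: CV_plus; apply: CV_mult => //; try exact: cv_const.
apply: CV_minus => //; exact: cv_const.
Qed.

Lemma comb_0 p (y x : vec p) : comb 0 y x = x.
Proof. apply: functional_extensionality => i; rewrite /comb /vadd /vscale; ring. Qed.
Lemma comb_1 p (y x : vec p) : comb 1 y x = y.
Proof. apply: functional_extensionality => i; rewrite /comb /vadd /vscale; ring. Qed.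

Lemma q_comb p t (x y : vec p) : 0 <= t <= 1 -> q (comb t x y) <= t * q x + (1 - t) * q y.
Proof.
move=> ht. rewrite /q /inner -sum_lin_ord. apply: sum_le => i _.
rewrite /comb /vadd /vscale /=.
have h1 : 0 <= t * (1 - t) by nra.
have h2 := Rle_0_sqr (x i - y i). rewrite /Rsqr in h2.
have := Rmult_le_pos _ _ h1 h2.
have e : t * (x i * x i) + (1 - t) * (y i * y i) - (t * x i + (1 - t) * y i) * (t * x i + (1 - t) * y i) = t * (1 - t) * ((x i - y i) * (x i - y i)) by ring.
lra.
Qed.

Section VI.
Variables (p : nat) (G : vec p -> vec p) (S : vec p -> Prop).

Lemma sol_minty x : monotone_on S G -> Sol G S x -> Minty G S x.
Proof.
move=> hm [hx hs]; split => // y hy.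
have := hm x y hx hy. have := hs y hy. rewrite inner_subl. lra.
Qed.

Lemma minty_sol x : is_convex S -> seqcont S G -> Minty G S x -> Sol G S x.
Proof.
move=> hc hG [hx hm]; split => // y hy.
pose ts k := / INR k.+1.
have hyk : forall k, S (comb (ts k) y x).
  move=> k; apply: hc => //. have := invN_pos k. have := invN_le1 k. rewrite /ts. lra.
apply: (cv_ge_lim (u := fun k => inner (G (comb (ts k) y x)) (vsub y x))).
  move=> k. have := hm _ (hyk k). rewrite comb_sub => h.
  have hp := invN_pos k. rewrite /ts in h *. nra.
apply: vcv_inner; last exact: vcv_const.
apply: hG => //. rewrite -{2}(comb_0 y x). apply: vcv_comb. exact: cv_invN.
Qed.

Lemma minty_convex t x y : is_convex S -> 0 <= t <= 1 -> Minty G S x -> Minty G S y ->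
  Minty G S (comb t x y).
Proof.
move=> hc ht [hx hmx] [hy hmy]; split; first exact: hc.
move=> z hz. have h1 := hmx z hz. have h2 := hmy z hz.
have -> : inner (G z) (vsub z (comb t x y)) = t * inner (G z) (vsub z x) + (1 - t) * inner (G z) (vsub z y).
  rewrite !inner_subr. rewrite /comb inner_addr !inner_scaler. ring.
nra.
Qed.

Lemma sol_convex : is_convex S -> seqcont S G -> monotone_on S G -> is_convex (Sol G S).
Proof.
move=> hc hG hm x y t hx hy ht. apply: minty_sol => //.
apply: minty_convex => //; exact: sol_minty.
Qed.

End VI.

Lemma convex_connected p (D : vec p -> Prop) : is_convex D -> connected D.
Proof.
move=> hc [U [V [hU [hV [hcov [[a [ha hUa]] [[b [hb hVb]] hdis]]]]]]].
pose path t := comb t b a.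
have hpath : forall t, 0 <= t <= 1 -> D (path t) by move=> t ht; apply: hc.
have hcl : forall W : vec p -> Prop, is_open W ->
   forall (u : nat -> R) t, (forall k, 0 <= u k <= 1) -> (forall k, W (path (u k))) -> Un_cv u t ->
   0 <= t <= 1 -> ~ W (path t) -> (exists W', is_open W' /\ W' (path t) /\
       forall z, D z -> W z -> W' z -> False) -> False.
  move=> W hW u t hu hWu hcv ht hn [W' [hW' [hW't hdisW]]].
  have [N HN] := vcv_open hW' hW't (vcv_comb b a hcv).
  apply: (hdisW (path (u N))); [exact: hpath | exact: hWu | exact: HN].
apply: (@interval_conn 0 1 (fun t => U (path t)) (fun t => V (path t))).
- lra.
- by rewrite /path comb_0.
- by rewrite /path comb_1.
- move=> t ht; exact: hcov (hpath t ht).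
- move=> t ht; exact: hdis (hpath t ht).
- move=> u t hu hUu hcv.
  have ht : 0 <= t <= 1 by split; [apply: (cv_ge_lim (u:=u)) | apply: (cv_le_lim (u:=u))] => // k; have := hu k; lra.
  apply: NNPP => hn. apply: (hcl U hU u t hu hUu hcv ht hn).
  exists V; split => //; split.
    by case: (hcov _ (hpath t ht)).
  move=> z hz h1 h2; exact: hdis z hz h1 h2.
- move=> u t hu hVu hcv.
  have ht : 0 <= t <= 1 by split; [apply: (cv_ge_lim (u:=u)) | apply: (cv_le_lim (u:=u))] => // k; have := hu k; lra.
  apply: NNPP => hn. apply: (hcl V hV u t hu hVu hcv ht hn).
  exists U; split => //; split.
    by case: (hcov _ (hpath t ht)).
  move=> z hz h1 h2; exact: hdis z hz h2 h1.
Qed.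

Definition Kr p (S : vec p -> Prop) r := fun z => S z /\ q z <= r * r.

Lemma Kr_convex p (S : vec p -> Prop) r : is_convex S -> is_convex (Kr S r).
Proof.
move=> hc x y t [hx qx] [hy qy] ht; split; first exact: hc.
have := q_comb x y ht. rewrite /comb. nra.
Qed.

Lemma Kr_sclosed p (S : vec p -> Prop) r : sclosed S -> sclosed (Kr S r).
Proof.
move=> hc u x hu hcv; split.
  apply: (hc u) => // k; by have [h _] := hu k.
apply: (cv_le_lim (u := fun k => q (u k))); last exact: vcv_q.
by move=> k; have [_ h] := hu k.
Qed.

Lemma Kr_bound p (S : vec p -> Prop) r z i : 0 <= r -> Kr S r z -> Rabs (z i) <= r.
Proof.
move=> hr [_ hz]. have := coord_le_q z i. move=> h.
apply: Rabs_le. nra.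
Qed.

Lemma local_global p (G : vec p -> vec p) (S : vec p -> Prop) r x :
  is_convex S -> Sol G (Kr S r) x -> q x < r * r -> Sol G S x.
Proof.
move=> hc [[hx hqx] hs] hlt; split => // y hy.
case: (Rle_or_lt (q y) (r * r)) => hqy.
  exact: hs.
pose th := (r * r - q x) / (q y - q x).
have eqth : th * (q y - q x) = r * r - q x by rewrite /th; field; lra.
have hth : 0 < th < 1 by split; nra.
have hK : Kr S r (comb th y x).
  split; first by apply: hc => //; lra.
  have hqc := @q_comb _ th y x ltac:(lra).
  have e : th * q y + (1 - th) * q x = q x + th * (q y - q x) by ring.
  lra.
have := hs _ hK. rewrite comb_sub => h. nra.
Qed.

Lemma sum_zero_mul I (r : seq I) (w c : I -> R) : (forall j, 0 <= w j) ->
  \big[Rplus/0]_(j <- r) w j = 0 -> \big[Rplus/0]_(j <- r) (w j * c j) = 0.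
Proof.
move=> hw; elim: r => [|a r IH]; first by rewrite !big_nil.
rewrite !big_cons => h.
have h1 := hw a. have h2 : 0 <= \big[Rplus/0]_(j <- r) w j by apply: sum_ge0.
have ha : w a = 0 by lra.
rewrite IH; last lra. rewrite ha; ring.
Qed.

Lemma conv_big p (S : vec p -> Prop) I (r : seq I) (w : I -> R) (y : I -> vec p) :
  is_convex S -> (forall j, 0 <= w j) -> \big[Rplus/0]_(j <- r) w j = 1 ->
  (forall j, S (y j)) -> S (fun i => \big[Rplus/0]_(j <- r) (w j * y j i)).
Proof.
move=> hc; elim: r w => [|a r IH] w hw; first by rewrite big_nil => h; lra.
rewrite big_cons => hs hy.
have h2 : 0 <= \big[Rplus/0]_(j <- r) w j by apply: sum_ge0.
set s := \big[Rplus/0]_(j <- r) w j in hs h2.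
case: (Req_dec s 0) => hs0.
  have -> : (fun i => \big[Rplus/0]_(j <- a :: r) (w j * y j i)) = y a.
    apply: functional_extensionality => i. rewrite big_cons sum_zero_mul //.
    have -> : w a = 1 by lra. ring.
  exact: hy.
have hspos : 0 < s by lra.
have hwa := hw a.
have hsum : \big[Rplus/0]_(j <- r) (w j / s) = 1.
  rewrite /Rdiv -big_distrl /= -/s. by field.
have hz := IH (fun j => w j / s) (fun j => Rmult_le_pos _ _ (hw j) (Rlt_le _ _ (Rinv_0_lt_compat _ hspos))) hsum hy.
have := hc (y a) _ (w a) (hy a) hz ltac:(split; lra).
move=> H.
suff -> : (fun i : 'I_p => \big[Rplus/0]_(j <- a :: r) (w j * y j i)) =
  vadd (vscale (w a) (y a)) (vscale (1 - w a) (fun i => \big[Rplus/0]_(j <- r) (w j / s * y j i))) by [].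
apply: functional_extensionality => i.
rewrite /vadd /vscale big_cons. congr (_ + _).
have -> : 1 - w a = s by lra.
rewrite big_distrr /=. apply: eq_bigr => j _. field. lra.
Qed.

Definition pos (a : R) := Rmax 0 a.

Lemma pos_ge0 a : 0 <= pos a. Proof. rewrite /pos; apply: Rmax_l. Qed.
Lemma pos_ge a : a <= pos a. Proof. rewrite /pos; apply: Rmax_r. Qed.
Lemma pos_lip a b : Rabs (pos a - pos b) <= Rabs (a - b).
Proof. rewrite /pos /Rmax. case: Rle_dec; case: Rle_dec => *; split_Rabs; lra. Qed.
Lemma pos_cv u l : Un_cv u l -> Un_cv (fun k => pos (u k)) (pos l).
Proof.
move=> h e he. have [N HN] := h e he. exists N => k hk.
rewrite /Rdist. apply: Rle_lt_trans (pos_lip _ _) _. exact: HN.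
Qed.
Lemma pos_sq_le a b : a <= b -> pos a * pos a <= b * b.
Proof. rewrite /pos /Rmax. case: Rle_dec => *; nra. Qed.

Lemma sq_ge0 a : 0 <= a * a. Proof. have := Rle_0_sqr a. by rewrite /Rsqr. Qed.

Definition unitv k (j : 'I_k) : 'I_k -> R := fun l => if l == j then 1 else 0.

Lemma sum_mul_unit k (j : 'I_k) (f : 'I_k -> R) :
  \big[Rplus/0]_(l < k) (f l * unitv j l) = f j.
Proof.
rewrite (bigD1 j) //= big1 => [|l /negbTE hl]; rewrite /unitv ?eqxx ?hl; ring.
Qed.

Lemma sum_unit k (j : 'I_k) : \big[Rplus/0]_(l < k) unitv j l = 1.
Proof.
rewrite -[RHS](sum_mul_unit j (fun _ => 1)). apply: eq_bigr => l _; ring.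
Qed.

Lemma coord_le_sum k (mu : 'I_k -> R) j : (forall l, 0 <= mu l) ->
  mu j <= \big[Rplus/0]_(l < k) mu l.
Proof.
move=> h. rewrite (bigD1 j) //=.
rewrite -[X in X <= _]Rplus_0_r; apply: Rplus_le_compat_l; apply: sum_ge0 => l _; exact: h.
Qed.

Lemma ML k (A : 'I_k -> 'I_k -> R) : (0 < k)%nat -> (forall i j, A i j + A j i <= 0) ->
  exists mu : 'I_k -> R, (forall j, 0 <= mu j) /\ \big[Rplus/0]_(j < k) mu j = 1 /\
    forall i, \big[Rplus/0]_(j < k) (A i j * mu j) <= 0.
Proof.
move=> hk hA.
pose Am (mu : 'I_k -> R) i := \big[Rplus/0]_(j < k) (A i j * mu j).
pose h (mu : 'I_k -> R) := \big[Rplus/0]_(i < k) (pos (Am mu i) * pos (Am mu i)).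
pose D (mu : 'I_k -> R) := (forall j, 0 <= mu j) /\ \big[Rplus/0]_(j < k) mu j = 1.
pose j0 : 'I_k := Ordinal hk.
have hD0 : D (unitv j0).
  split; last exact: sum_unit. move=> l; rewrite /unitv; case: (l == j0); lra.
have hh0 : forall mu, 0 <= h mu.
  move=> mu; apply: sum_ge0 => i _. have := pos_ge0 (Am mu i); nra.
have [mu0 [hD hmin]] : exists mu0, D mu0 /\ forall mu, D mu -> h mu0 <= h mu.
  pose E v := exists mu, D mu /\ v = - h mu.
  have hbd : bound E.
    exists 0 => v [mu [_ ->]]. have := hh0 mu. lra.
  have [s [hub hlub]] := completeness E hbd (ex_intro _ _ (ex_intro _ (unitv j0) (conj hD0 erefl))).
  have Hex : forall N, exists mu, D mu /\ s - / INR (S N) < - h mu.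
    move=> N; apply: NNPP => hn.
    have : s <= s - / INR (S N).
      apply: hlub => v [mu [hmu ->]]. apply: Rnot_lt_le => hlt. apply: hn. by exists mu.
    have := invN_pos N. lra.
  have [ms Hms] := fchoice Hex.
  have hb : forall N j, Rabs (ms N j) <= 1.
    move=> N j. have [[h1 h2] _] := Hms N. have := coord_le_sum j h1. rewrite h2.
    have := h1 j. move=> *. apply: Rabs_le. lra.
  have [phi [mu0 [hphi hcv]]] := BWv hb.
  have hD : D mu0.
    split.
      move=> j. apply: (cv_ge_lim (u := fun N => ms (phi N) j)) => //.
      move=> N. have [[h1 _] _] := Hms (phi N). exact: h1.
    apply: (UL_sequence (fun N => \big[Rplus/0]_(j < k) ms (phi N) j)).
      by apply: sum_cv => j _; exact: hcv.
    have -> : (fun N => \big[Rplus/0]_(j < k) ms (phi N) j) = (fun _ => 1).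
      apply: functional_extensionality => N. by have [[_ h2] _] := Hms (phi N).
    exact: cv_const.
  have hh : Un_cv (fun N => h (ms (phi N))) (h mu0).
    apply: sum_cv => i _. apply: CV_mult; apply: pos_cv; apply: sum_cv => j _;
      (apply: CV_mult; [exact: cv_const | exact: hcv]).
  exists mu0; split => // mu hmu.
  have hcv2 : Un_cv (fun N => - s + / INR (S N)) (- s + 0).
    apply: CV_plus; [exact: cv_const | exact: cv_invN].
  rewrite Rplus_0_r in hcv2.
  have : h mu0 <= - s.
    apply: (Rle_cv_lim (Un := fun N => h (ms (phi N))) (Vn := fun N => - s + / INR (S N))) => //.
      move=> N. have [_ h1] := Hms (phi N).
      have : / INR (S (phi N)) <= / INR (S N).
        apply: Rinv_le_contravar; first by apply: lt_0_INR; lia.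
        apply: le_INR. have := incr_ge hphi N. lia.
      lra.
  have : - h mu <= s by apply: hub; exists mu.
  lra.
pose z i := pos (Am mu0 i).
have hz0 : forall i, 0 <= z i by move=> i; exact: pos_ge0.
have hvar : forall j, \big[Rplus/0]_(i < k) (z i * z i) <= \big[Rplus/0]_(i < k) (z i * A i j).
  move=> j.
  pose c := \big[Rplus/0]_(i < k) (z i * (A i j - z i)).
  pose d := \big[Rplus/0]_(i < k) ((A i j - z i) * (A i j - z i)).
  suff hc : 0 <= c.
    move: hc. rewrite /c.
    have -> : \big[Rplus/0]_(i < k) (z i * (A i j - z i)) =
       \big[Rplus/0]_(i < k) (1 * (z i * A i j) + (-1) * (z i * z i)).
      apply: eq_bigr => i _; ring.
    rewrite sum_lin_ord. lra.
  have key : forall t, 0 < t <= 1 -> 0 <= 2 * t * c + t * t * d.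
    move=> t ht. pose mut := fun l => (1 - t) * mu0 l + t * unitv j l.
    have hDt : D mut.
      split.
        move=> l. have [h1 _] := hD. have := h1 l. rewrite /mut /unitv.
        case: (l == j) => ?; nra.
      rewrite /mut sum_lin_ord sum_unit. have [_ ->] := hD. ring.
    have hAm : forall i, Am mut i = (1 - t) * Am mu0 i + t * A i j.
      move=> i. rewrite /Am /mut.
      transitivity (\big[Rplus/0]_(l < k) ((1 - t) * (A i l * mu0 l) + t * (A i l * unitv j l))).
        apply: eq_bigr => l _; ring.
      by rewrite sum_lin_ord sum_mul_unit.
    have h1 := hmin _ hDt.
    have h2 : h mut <= \big[Rplus/0]_(i < k) ((z i + t * (A i j - z i)) * (z i + t * (A i j - z i))).
      apply: sum_le => i _. rewrite hAm. apply: pos_sq_le.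
      have := pos_ge (Am mu0 i). rewrite -/(z i). nra.
    have h3 : \big[Rplus/0]_(i < k) ((z i + t * (A i j - z i)) * (z i + t * (A i j - z i))) =
        h mu0 + 2 * t * c + t * t * d.
      transitivity (\big[Rplus/0]_(i < k) (1 * (z i * z i + 2 * t * (z i * (A i j - z i))) +
                     (t * t) * ((A i j - z i) * (A i j - z i)))).
        apply: eq_bigr => i _; ring.
      rewrite sum_lin_ord.
      transitivity (\big[Rplus/0]_(i < k) (1 * (z i * z i) + (2 * t) * (z i * (A i j - z i))) + t * t * d).
        rewrite /d. congr (_ + _). rewrite Rmult_1_l. apply: eq_bigr => i _; ring.
      rewrite sum_lin_ord /c /h /z. ring.
    lra.
  apply: Rnot_lt_le => hc.
  have hd : 0 <= d by apply: sum_ge0 => i _; exact: sq_ge0.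
  pose t := Rmin 1 (- c / (d + 1)).
  have ht1 : t <= 1 by apply: Rmin_l.
  have ht2 : t <= - c / (d + 1) by apply: Rmin_r.
  have ht0 : 0 < t.
    apply: Rmin_pos; first lra. apply: Rdiv_lt_0_compat; lra.
  have ht3 : t * (d + 1) <= - c.
    have e : - c = (- c / (d + 1)) * (d + 1) by field; lra.
    rewrite e. apply: Rmult_le_compat_r; lra.
  have := key t (conj ht0 ht1). nra.
pose Z := \big[Rplus/0]_(i < k) (z i * z i).
have hZ0 : 0 <= Z by apply: sum_ge0 => i _; nra.
case: (Req_dec Z 0) => hZ.
  exists mu0; split; first by have [h1 _] := hD.
  split; first by have [_ h2] := hD.
  move=> i. have hzi := coord_le_q z i. have hq : q z = 0 := hZ. rewrite hq in hzi.
  have hzz : z i = 0 by have := hz0 i; nra.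
  have := pos_ge (Am mu0 i). rewrite -/(z i) hzz. by [].
exfalso.
have hZpos : 0 < Z by lra.
have hsz : 0 < \big[Rplus/0]_(j < k) z j.
  have hs0 : 0 <= \big[Rplus/0]_(j < k) z j by apply: sum_ge0 => j _; exact: hz0.
  case: (Req_dec (\big[Rplus/0]_(j < k) z j) 0) => hs; last lra.
  have := @sum_zero_mul _ (index_enum 'I_k) z z hz0 hs. rewrite -/Z. lra.
pose X := \big[Rplus/0]_(j < k) \big[Rplus/0]_(i < k) (z j * z i * A i j).
have hX1 : Z * \big[Rplus/0]_(j < k) z j <= X.
  rewrite big_distrr /=. apply: sum_le => j _.
  have -> : \big[Rplus/0]_(i < k) (z j * z i * A i j) = z j * \big[Rplus/0]_(i < k) (z i * A i j).
    rewrite big_distrr /=. apply: eq_bigr => i _; ring.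
  have := hvar j. rewrite -/Z. have := hz0 j. nra.
pose X' := \big[Rplus/0]_(j < k) \big[Rplus/0]_(i < k) (z i * z j * A j i).
have hXX : X = X'.
  rewrite /X /X' exchange_big /=. apply: eq_bigr => j _. apply: eq_bigr => i _. ring.
have hX2 : X + X' <= 0.
  rewrite /X /X' -big_split /=.
  apply: (Rle_trans _ (\big[Rplus/0]_(j < k) 0)); last by rewrite big1 //; apply: Rle_refl.
  apply: sum_le => j _. rewrite -big_split /=.
  apply: (Rle_trans _ (\big[Rplus/0]_(i < k) 0)); last by rewrite big1 //; apply: Rle_refl.
  apply: sum_le => i _.
  have := hA i j. have := hz0 i. have := hz0 j. move=> h1 h2 h3.
  have : 0 <= z j * z i by nra. nra.
have := Rmult_lt_0_compat _ _ hZpos hsz. lra.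
Qed.

Lemma fin_lemma p (G : vec p -> vec p) (Ks : vec p -> Prop) k (Y : 'I_k -> vec p) :
  (0 < k)%nat -> is_convex Ks -> monotone_on Ks G -> (forall j, Ks (Y j)) ->
  exists x, Ks x /\ forall j, 0 <= inner (G (Y j)) (vsub (Y j) x).
Proof.
move=> hk hc hm hY.
pose A i j := inner (G (Y i)) (vsub (Y j) (Y i)).
have hA : forall i j, A i j + A j i <= 0.
  move=> i j. have := hm (Y j) (Y i) (hY j) (hY i). rewrite /A !inner_subr !inner_subl. lra.
have [mu [hmu [hsum hAmu]]] := ML hk hA.
exists (fun i => \big[Rplus/0]_(j < k) (mu j * Y j i)); split.
  exact: conv_big.
move=> i. have := hAmu i. rewrite inner_subr.
set g := G (Y i).
have -> : inner g (fun l => \big[Rplus/0]_(j < k) (mu j * Y j l)) =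
    \big[Rplus/0]_(j < k) (mu j * inner g (Y j)).
  rewrite /inner. under eq_bigr => l _ do rewrite big_distrr /=.
  rewrite exchange_big /=. apply: eq_bigr => j _. rewrite big_distrr /=. apply: eq_bigr => l _; ring.
have -> : \big[Rplus/0]_(j < k) (A i j * mu j) =
    \big[Rplus/0]_(j < k) (1 * (mu j * inner g (Y j)) + (- inner g (Y i)) * mu j).
  apply: eq_bigr => j _. rewrite /A inner_subr -/g. ring.
rewrite sum_lin_ord hsum. lra.
Qed.

Lemma net p (Ks : vec p -> Prop) r eps : 0 < eps -> (forall z, Ks z -> forall i, Rabs (z i) <= r) ->
  exists k (Y : 'I_k -> vec p), (forall j, Ks (Y j)) /\
    forall y, Ks y -> exists j, forall i, Rabs (y i - Y j i) < eps.
Proof.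
move=> he hb. apply: NNPP => H.
pose x0 : vec p := fun _ => 0.
have step : forall L : seq (vec p), exists y,
    (forall j : nat, (j < size L)%nat -> Ks (nth x0 L j)) ->
    Ks y /\ forall j : nat, (j < size L)%nat -> exists i, eps <= Rabs (y i - nth x0 L j i).
  move=> L. case: (classic (forall j : nat, (j < size L)%nat -> Ks (nth x0 L j))) => hL; last first.
    by exists x0 => h; exfalso; apply: hL.
  apply: NNPP => hn. apply: H. exists (size L), (fun j => nth x0 L j); split.
    move=> j; apply: hL; exact: ltn_ord.
  move=> y hy. apply: NNPP => hn2. apply: hn. exists y => _; split => // j hj.
  apply: NNPP => hn3. apply: hn2. exists (Ordinal hj) => i /=.
  apply: Rnot_le_lt => hle. apply: hn3. by exists i.
have [f Hf] := fchoice step.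
pose fix Ls N := match N with 0 => [::] | S N' => f (Ls N') :: Ls N' end.
have hLs : forall N j, (j < size (Ls N))%nat -> Ks (nth x0 (Ls N) j).
  elim=> [|N IH] j /=; first by [].
  case: j => [|j] hj /=; first by have [h _] := Hf (Ls N) IH.
  exact: IH.
have hu : forall N, Ks (f (Ls N)) by move=> N; have [h _] := Hf (Ls N) (hLs N).
have hin : forall M N, (N < M)%nat -> exists j, (j < size (Ls M))%nat /\ nth x0 (Ls M) j = f (Ls N).
  elim=> [|M IH] N hNM; first by [].
  case: (eqVneq N M) => [->|hne]; first by exists 0%nat.
  have [j [hj1 hj2]] := IH N ltac:(lia). by exists j.+1.
have hfar : forall N M, (N < M)%nat -> exists i, eps <= Rabs (f (Ls M) i - f (Ls N) i).
  move=> N M hNM. have [j [hj1 hj2]] := hin M N hNM. have [_ h] := Hf (Ls M) (hLs M).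
  have [i hi] := h j hj1. rewrite hj2 in hi. by exists i.
have [phi [x [hphi hcv]]] := BWv (u := fun N => f (Ls N)) (M := r) (fun k i => hb _ (hu k) i).
have he2 : 0 < eps / 2 by lra.
have [N0 HN0] := vcv_dist hcv he2.
have [i hi] := hfar (phi N0) (phi N0.+1) (hphi N0).
have h1 := Rabs_coord_dist x (f (Ls (phi N0))) i.
have h2 := Rabs_coord_dist x (f (Ls (phi N0.+1))) i.
have h3 := HN0 N0 (leqnn _). have h4 := HN0 N0.+1 (leqnSn _).
move: hi h1 h2 h3 h4. simpl.
set a := f (Ls (phi N0)) i. set b := f (Ls (phi N0.+1)) i.
set da := vdist x _. set db := vdist x _.
split_Rabs; lra.
Qed.

Lemma exist_sol p (G : vec p -> vec p) (Ks : vec p -> Prop) r :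
  is_convex Ks -> sclosed Ks -> (forall z, Ks z -> forall i, Rabs (z i) <= r) -> (exists z, Ks z) ->
  seqcont Ks G -> monotone_on Ks G -> exists x, Sol G Ks x.
Proof.
move=> hc hcl hb [z0 hz0] hG hm.
have hnet : forall N : nat, exists kY : {k : nat & 'I_k -> vec p},
   (forall j, Ks (projT2 kY j)) /\
   forall y, Ks y -> exists j, forall i, Rabs (y i - projT2 kY j i) < / INR N.+1.
  move=> N. have [k [Y hY]] := net (invN_pos N) hb. by exists (existT _ k Y).
have [nets Hn] := fchoice hnet.
have hx : forall N, exists x, Ks x /\
    forall j, 0 <= inner (G (projT2 (nets N) j)) (vsub (projT2 (nets N) j) x).
  move=> N. have [h1 h2] := Hn N. have [j _] := h2 z0 hz0.
  apply: fin_lemma => //. exact: (leq_ltn_trans (leq0n j) (ltn_ord j)).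
have [xs Hx] := fchoice hx.
have [phi [xb [hphi hcv]]] := BWv (u := xs) (M := r) (fun N i => hb _ (proj1 (Hx N)) i).
have hxb : Ks xb.
  apply: (hcl (fun k => xs (phi k))) => // k; by have [h _] := Hx (phi k).
exists xb. apply: minty_sol => //. split => // y hy.
have hw : forall N, exists j, forall i, Rabs (y i - projT2 (nets N) j i) < / INR N.+1.
  move=> N. have [_ h] := Hn N. exact: h.
have [js Hj] := fchoice_dep hw.
pose w N := projT2 (nets N) (js N).
have hwS : forall N, Ks (w N) by move=> N; have [h _] := Hn N; exact: h.
have hwcv : vcv w y.
  move=> i. apply: cv_bound => N. have := Hj N i. rewrite Rabs_minus_sym /w. lra.
apply: (cv_ge_lim (u := fun k => inner (G (w (phi k))) (vsub (w (phi k)) (xs (phi k))))).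
  move=> k. have [_ h] := Hx (phi k). exact: h.
apply: vcv_inner.
  apply: hG => //. exact: vcv_sub.
apply: vcv_vsub; [exact: vcv_sub | exact: hcv].
Qed.

Definition xpath m (xi0 xi1 : 'I_m -> R) t : 'I_m -> R := fun l => (1 - t) * xi0 l + t * xi1 l.

Lemma ri_nonneg m (xi : 'I_m -> R) : ri_simplex xi -> forall l, 0 <= xi l.
Proof. move=> [h _] l; have := h l; lra. Qed.

Lemma xpath_ri m (xi0 xi1 : 'I_m -> R) t : ri_simplex xi0 -> ri_simplex xi1 -> 0 <= t <= 1 ->
  ri_simplex (xpath xi0 xi1 t).
Proof.
move=> [h0 s0] [h1 s1] ht; split.
  move=> l; rewrite /xpath. have := h0 l; have := h1 l; nra.
rewrite /xpath sum_lin_ord s0 s1; ring.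
Qed.

Lemma xpath_cv m (xi0 xi1 : 'I_m -> R) ts t : Un_cv ts t ->
  vcv (fun k => xpath xi0 xi1 (ts k)) (xpath xi0 xi1 t).
Proof.
move=> h l; rewrite /xpath. apply: CV_plus; apply: CV_mult => //; try exact: cv_const.
apply: CV_minus => //; exact: cv_const.
Qed.

Lemma xpath_0 m (xi0 xi1 : 'I_m -> R) : xpath xi0 xi1 0 = xi0.
Proof. apply: functional_extensionality => l; rewrite /xpath; ring. Qed.
Lemma xpath_1 m (xi0 xi1 : 'I_m -> R) : xpath xi0 xi1 1 = xi1.
Proof. apply: functional_extensionality => l; rewrite /xpath; ring. Qed.

Lemma interval_conn2 a b (P Q : R -> Prop) : P a -> Q b ->
  (forall t, Rmin a b <= t <= Rmax a b -> P t \/ Q t) ->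
  (forall t, Rmin a b <= t <= Rmax a b -> P t -> Q t -> False) ->
  sclosedR (Rmin a b) (Rmax a b) P -> sclosedR (Rmin a b) (Rmax a b) Q -> False.
Proof.
move=> hPa hQb hcov hdis hP hQ. case: (Rle_or_lt a b) => hab.
- rewrite Rmin_left // Rmax_right // in hcov hdis hP hQ.
  exact: (interval_conn hab hPa hQb hcov hdis hP hQ).
- have hba : b <= a by lra.
  rewrite Rmin_right // Rmax_left // in hcov hdis hP hQ.
  apply: (interval_conn hba hQb hPa).
  + move=> t ht; case: (hcov t ht) => h; [right|left]; exact: h.
  + move=> t ht h1 h2; exact: hdis t ht h2 h1.
  + exact: hQ.
  + exact: hP.
Qed.

Section Main.
Variables (n m : nat) (K : vec n -> Prop) (F : 'I_m -> vec n -> vec n).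
Hypotheses (hKcl : sclosed K) (hKcv : is_convex K)
  (hFc : forall l, continuous_on K (F l)) (hmon : monotone_VVI K F).

Definition Phi xi := Sol (Fxi F xi) K.

Lemma seqcont_Fxi xi (Ks : vec n -> Prop) : (forall z, Ks z -> K z) -> seqcont Ks (Fxi F xi).
Proof.
move=> hs u x hx hu hcv.
apply: (@Fxi_cv n m K F (fun _ => xi)) => //; [exact: hs | move=> k; exact: hs | exact: vcv_const].
Qed.

Lemma mono_Fxi xi (Ks : vec n -> Prop) : (forall l, 0 <= xi l) -> (forall z, Ks z -> K z) ->
  monotone_on Ks (Fxi F xi).
Proof. move=> h hs x y hx hy. apply: (Fxi_mono h hmon); exact: hs. Qed.

Lemma Phi_convex xi : (forall l, 0 <= xi l) -> is_convex (Phi xi).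
Proof.
move=> h. apply: sol_convex => //; [exact: seqcont_Fxi | exact: mono_Fxi].
Qed.

Lemma B1 xi0 xi1 t M r : ri_simplex xi0 -> ri_simplex xi1 -> 0 <= t <= 1 -> 0 <= M -> M < r ->
  (exists xt, Phi (xpath xi0 xi1 t) xt) ->
  (forall z, Phi (xpath xi0 xi1 t) z -> q z <= M * M) ->
  exists d, 0 < d /\ forall s, 0 <= s <= 1 -> Rabs (s - t) < d ->
    forall z, Sol (Fxi F (xpath xi0 xi1 s)) (Kr K r) z -> q z < r * r.
Proof.
move=> h0 h1 ht hM hMr [xt hxt] hbd.
apply: NNPP => H.
have Hseq : forall N : nat, exists sz : R * vec n,
    (0 <= sz.1 <= 1 /\ Rabs (sz.1 - t) < / INR N.+1) /\
    Sol (Fxi F (xpath xi0 xi1 sz.1)) (Kr K r) sz.2 /\ r * r <= q sz.2.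
  move=> N. apply: NNPP => hn. apply: H. exists (/ INR N.+1); split; first exact: invN_pos.
  move=> s hs hst z hz. apply: Rnot_le_lt => hle. apply: hn. by exists (s, z).
have [sz Hsz] := fchoice Hseq.
have hscv : Un_cv (fun N => (sz N).1) t.
  apply: cv_bound => N. have [[_ h] _] := Hsz N. lra.
have hr : 0 <= r by lra.
have hzb : forall N i, Rabs ((sz N).2 i) <= r.
  move=> N i. have [_ [[h _] _]] := Hsz N. exact: (Kr_bound i hr h).
have [phi [zb [hphi hcv]]] := BWv hzb.
have hKrK : forall z, Kr K r z -> K z by move=> z [].
have hsolb : Sol (Fxi F (xpath xi0 xi1 t)) (Kr K r) zb.
  apply: (@sol_limit n m K F (Kr K r) (fun k => xpath xi0 xi1 (sz (phi k)).1) (xpath xi0 xi1 t)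
     (fun k => (sz (phi k)).2)) => //.
  - exact: Kr_sclosed.
  - by move=> k; have [_ [h _]] := Hsz (phi k).
  - exact: (@xpath_cv _ xi0 xi1 (fun k => (sz (phi k)).1) t (cv_sub hphi hscv)).
have hqzb : r * r <= q zb.
  apply: (cv_ge_lim (u := fun k => q (sz (phi k)).2)); last exact: vcv_q.
  by move=> k; have [_ [_ h]] := Hsz (phi k).
pose G := Fxi F (xpath xi0 xi1 t).
have hnn := ri_nonneg (xpath_ri h0 h1 ht).
have hconv : is_convex (Sol G (Kr K r)).
  apply: sol_convex; [exact: Kr_convex | exact: seqcont_Fxi | exact: mono_Fxi].
have hxtr : Sol G (Kr K r) xt.
  have [hxK hxs] := hxt. split.
    split => //. have := hbd xt hxt. nra.
  move=> y [hy _]; exact: hxs.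
pose g th := q (comb th zb xt).
have hdich : forall th, 0 <= th <= 1 -> g th <= M * M \/ r * r <= g th.
  move=> th hth. case: (Rlt_or_le (g th) (r * r)) => h; last by right.
  left. apply: hbd. apply: (local_global hKcv _ h). exact: hconv.
apply: (@interval_conn 0 1 (fun th => g th <= M * M) (fun th => r * r <= g th)).
- lra.
- rewrite /g comb_0. exact: hbd.
- by rewrite /g comb_1.
- exact: hdich.
- move=> th _ ha hb. nra.
- move=> u th hu hP hcvu. apply: (cv_le_lim (u := fun k => g (u k))) => //.
  exact: vcv_q (vcv_comb zb xt hcvu).
- move=> u th hu hP hcvu. apply: (cv_ge_lim (u := fun k => g (u k))) => //.
  exact: vcv_q (vcv_comb zb xt hcvu).
Qed.

Lemma B2 xi r : ri_simplex xi -> 0 <= r -> (exists z, Kr K r z) ->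
  (forall z, Sol (Fxi F xi) (Kr K r) z -> q z < r * r) ->
  exists z, Phi xi z /\ q z <= r * r.
Proof.
move=> hxi hr hne H.
have hKrK : forall z, Kr K r z -> K z by move=> z [].
have [z hz] : exists z, Sol (Fxi F xi) (Kr K r) z.
  apply: (exist_sol (r := r)) => //.
  - exact: Kr_convex.
  - exact: Kr_sclosed.
  - move=> z0 hz0 i; exact: (Kr_bound i hr hz0).
  - exact: seqcont_Fxi.
  - apply: mono_Fxi => //; exact: ri_nonneg.
have hlt := H z hz. exists z; split; [exact: (local_global hKcv hz hlt) | lra].
Qed.


Lemma Phi_SP xi z : ri_simplex xi -> Phi xi z -> SolPr F K z.
Proof. move=> h hz; by exists xi. Qed.

Lemma Phi_conn xi : ri_simplex xi -> connected (Phi xi).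
Proof. move=> h; apply: convex_connected; apply: Phi_convex; exact: ri_nonneg. Qed.

Lemma comp_sub C D : conn_component C (SolPr F K) -> Defs.subset D (SolPr F K) -> connected D ->
  (exists x, C x /\ D x) -> Defs.subset D C.
Proof. move=> [_ [_ [_ h]]]; exact: h. Qed.

Lemma comp_closure C u x : conn_component C (SolPr F K) -> SolPr F K x ->
  (forall k, C (u k)) -> vcv u x -> C x.
Proof.
move=> hC hx hu hcv. have [hne [hsub [hconn hmax]]] := hC.
pose D z := C z \/ z = x.
have hDsub : Defs.subset D (SolPr F K) by move=> z [h|->]; [exact: hsub|].
suff hD : connected D.
  apply: (hmax D hDsub hD _ x (or_intror erefl)). have [c hc] := hne. by exists c; split; [|left].
move=> [U [V [hU [hV [hcov [[a [ha hUa]] [[b [hb hVb]] hdis]]]]]]].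
apply: hconn.
have gen : forall W W' : vec n -> Prop, is_open W -> W x -> (exists z, D z /\ W' z) ->
    (forall z, D z -> W z -> W' z -> False) ->
    (exists z, C z /\ W z) /\ (exists z, C z /\ W' z).
  move=> W W' hW hWx [w [hw hW'w]] hd. split.
    have [N HN] := vcv_open hW hWx hcv. exists (u N); split => //; exact: HN N (leqnn N).
  case: hw => [hw|hw]; first by exists w.
  by exfalso; subst w; exact: hd x (or_intror erefl) hWx hW'w.
case: (hcov x (or_intror erefl)) => hxW.
- have [[c1 hc1] [c2 hc2]] := gen U V hU hxW (ex_intro _ b (conj hb hVb)) hdis.
  exists U, V; split => //; split => //; split.
    move=> z hz; exact: hcov z (or_introl hz).
  split; first by exists c1. split; first by exists c2.
  move=> z hz; exact: hdis z (or_introl hz).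
- have [[c1 hc1] [c2 hc2]] := gen V U hV hxW (ex_intro _ a (conj ha hUa))
     (fun z hz h1 h2 => hdis z hz h2 h1).
  exists U, V; split => //; split => //; split.
    move=> z hz; exact: hcov z (or_introl hz).
  split; first by exists c2. split; first by exists c1.
  move=> z hz; exact: hdis z (or_introl hz).
Qed.

Lemma open_T C xi0 xi1 t M : conn_component C (SolPr F K) -> (forall x, C x -> vnorm x <= M) ->
  ri_simplex xi0 -> ri_simplex xi1 -> 0 <= t <= 1 ->
  (exists x, Phi (xpath xi0 xi1 t) x /\ C x) ->
  exists d, 0 < d /\ forall s, 0 <= s <= 1 -> Rabs (s - t) < d ->
    exists x, Phi (xpath xi0 xi1 s) x /\ C x.
Proof.
move=> hC hM h0 h1 ht [xt [hxt hCxt]].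
have hM0 : 0 <= M by have := hM xt hCxt; have := sqrt_pos (inner xt xt); rewrite /vnorm; lra.
have hsubC : forall z, Phi (xpath xi0 xi1 t) z -> C z.
  move=> z hz. apply: (comp_sub hC (D := Phi (xpath xi0 xi1 t))) => //.
  - move=> w hw; exact: Phi_SP (xpath_ri h0 h1 ht) hw.
  - exact: Phi_conn (xpath_ri h0 h1 ht).
  - by exists xt.
have hbd : forall z, Phi (xpath xi0 xi1 t) z -> q z <= M * M.
  move=> z hz; apply: vnorm_q; apply: hM; exact: hsubC.
pose r := M + 1.
have hMr : M < r by rewrite /r; lra.
have [d [hd Hd]] := B1 h0 h1 ht hM0 hMr (ex_intro _ xt hxt) hbd.
have hr : 0 <= r by lra.
have hKrne : exists z, Kr K r z.
  exists xt; split; first by have [h _] := hxt.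
  have := hbd xt hxt. nra.
have hB2 : forall s, 0 <= s <= 1 -> Rabs (s - t) < d ->
    exists z, Phi (xpath xi0 xi1 s) z /\ q z <= r * r.
  move=> s hs hst. apply: B2 => //; [exact: xpath_ri | exact: Hd].
exists d; split => // s hs hst.
pose lo := Rmin s t. pose hi := Rmax s t.
have hI : forall u, lo <= u <= hi -> 0 <= u <= 1 /\ Rabs (u - t) < d.
  move=> u. rewrite /lo /hi /Rmin /Rmax. case: Rle_dec => ? hu; split; try lra;
  move: hst; split_Rabs; lra.
pose D z := exists u, lo <= u <= hi /\ Phi (xpath xi0 xi1 u) z.
have hDsub : Defs.subset D (SolPr F K).
  move=> z [u [hu hz]]. have [hu01 _] := hI u hu. exact: Phi_SP (xpath_ri h0 h1 hu01) hz.
have htI : lo <= t <= hi by split; [apply: Rmin_r | apply: Rmax_r].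
have hsI : lo <= s <= hi by split; [apply: Rmin_l | apply: Rmax_l].
suff hD : connected D.
  have hsub := comp_sub hC hDsub hD (ex_intro _ xt (conj hCxt (ex_intro _ t (conj htI hxt)))).
  have [z [hz _]] := hB2 s hs hst. exists z; split => //. apply: hsub. by exists s.
move=> [U [V [hU [hV [hcov [[a [[ua [hua ha]] hUa]] [[b [[ub [hub hb]] hVb]] hdis]]]]]]].
have hnotboth : forall (W W' : vec n -> Prop), is_open W -> is_open W' ->
    (forall z, D z -> W z \/ W' z) -> (forall z, D z -> W z -> W' z -> False) ->
    forall u, lo <= u <= hi ->
    (exists z, Phi (xpath xi0 xi1 u) z /\ W z) -> (exists z, Phi (xpath xi0 xi1 u) z /\ W' z) -> False.
  move=> W W' hW hW' hcovW hdisW u hu hPU hPV. have [hu01 _] := hI u hu.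
  apply: (Phi_conn (xpath_ri h0 h1 hu01)). exists W, W'. split => //; split => //; split.
    move=> z hz; apply: hcovW; by exists u.
  split => //; split => //.
  move=> z hz; apply: hdisW; by exists u.
have hclosed : forall (W W' : vec n -> Prop), is_open W' ->
    (forall z, D z -> W z \/ W' z) -> (forall z, D z -> W z -> W' z -> False) ->
    (forall u, lo <= u <= hi -> (exists z, Phi (xpath xi0 xi1 u) z /\ W z) ->
        (exists z, Phi (xpath xi0 xi1 u) z /\ W' z) -> False) ->
    forall c e, lo <= c -> e <= hi ->
    sclosedR c e (fun u => exists z, Phi (xpath xi0 xi1 u) z /\ W z).
  move=> W W' hW' hcovW hdisW hnb c e hc he us u hus hPus hcvu.
  have hu : lo <= u <= hi.
    split.
      apply: Rle_trans hc _. apply: (cv_ge_lim (u := us)) => // k; have := hus k; lra.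
    apply: Rle_trans _ he. apply: (cv_le_lim (u := us)) => // k; have := hus k; lra.
  have husI : forall k, lo <= us k <= hi by move=> k; have := hus k; lra.
  have Hw : forall k, exists w, (Phi (xpath xi0 xi1 (us k)) w /\ q w <= r * r) /\ W w.
    move=> k. have [h01 hd'] := hI _ (husI k). have [w [hw hqw]] := hB2 _ h01 hd'.
    exists w; split => //.
    have hDw : D w by exists (us k).
    case: (hcovW w hDw) => // hW'w. exfalso. apply: (hnb (us k) (husI k) (hPus k)). by exists w.
  have [ws Hws] := fchoice Hw.
  have hwb : forall k i, Rabs (ws k i) <= r.
    move=> k i. have [[[hK _] hq] _] := Hws k. exact: (Kr_bound i hr (conj hK hq)).
  have [phi [wb [hphi hcvw]]] := BWv hwb.
  have hwbPhi : Phi (xpath xi0 xi1 u) wb.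
    apply: (@sol_limit n m K F K (fun k => xpath xi0 xi1 (us (phi k))) (xpath xi0 xi1 u)
              (fun k => ws (phi k))) => //.
    - move=> k; have [[h _] _] := Hws (phi k); exact: h.
    - exact: (@xpath_cv _ xi0 xi1 (fun k => us (phi k)) u (cv_sub hphi hcvu)).
  have hDwb : D wb by exists u.
  case: (hcovW wb hDwb) => hWwb; first by exists wb.
  exfalso. have [N HN] := vcv_open hW' hWwb hcvw.
  have [[hN1 _] hN2] := Hws (phi N).
  apply: (hdisW (ws (phi N))) => //; [by exists (us (phi N)) | exact: HN N (leqnn N)].
have hlo : lo <= Rmin ua ub by apply: Rmin_glb; lra.
have hhi : Rmax ua ub <= hi by apply: Rmax_lub; lra.
have hin : forall u, Rmin ua ub <= u <= Rmax ua ub -> lo <= u <= hi by move=> u hu; lra.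
have hdis' : forall z, D z -> V z -> U z -> False by move=> z hz h1' h2'; exact: hdis z hz h2' h1'.
have hcov' : forall z, D z -> V z \/ U z by move=> z hz; case: (hcov z hz) => h; [right|left]; exact: h.
apply: (@interval_conn2 ua ub (fun u => exists z, Phi (xpath xi0 xi1 u) z /\ U z)
          (fun u => exists z, Phi (xpath xi0 xi1 u) z /\ V z)).
- by exists a.
- by exists b.
- move=> u hu. have huI := hin u hu. have [h01 hd'] := hI u huI.
  have [z [hz _]] := hB2 u h01 hd'.
  case: (hcov z (ex_intro _ u (conj huI hz))) => h; [left|right]; by exists z.
- move=> u hu; exact: (hnotboth U V hU hV hcov hdis u (hin u hu)).
- apply: (hclosed U V) => //. move=> u hu; exact: (hnotboth U V hU hV hcov hdis u hu).
- apply: (hclosed V U) => //. move=> u hu h1' h2'; exact: (hnotboth U V hU hV hcov hdis u hu h2' h1').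
Qed.

Lemma part_a : ~ connected (SolPr F K) ->
  forall C, conn_component C (SolPr F K) -> ~ vbounded C.
Proof.
move=> hnc C hC [M hM]. apply: hnc.
have [hne [hsub [hconn hmax]]] := hC.
suff hall : forall y, SolPr F K y -> C y.
  move=> [U [V [hU [hV [hcov [[a [ha hUa]] [[b [hb hVb]] hdis]]]]]]]. apply: hconn.
  exists U, V; split => //; split => //; split.
    move=> z hz; exact: hcov z (hsub z hz).
  split; first by exists a; split => //; exact: hall.
  split; first by exists b; split => //; exact: hall.
  move=> z hz; exact: hdis z (hsub z hz).
move=> y [xi1 [h1 hy]].
have [x0 hx0] := hne. have [xi0 [h0 hx0']] := hsub x0 hx0.
pose T t := exists x, Phi (xpath xi0 xi1 t) x /\ C x.
have hT1 : T 1.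
  apply: NNPP => hn1.
  apply: (@interval_conn 0 1 T (fun t => ~ T t)).
  - lra.
  - exists x0; rewrite xpath_0; split => //.
  - exact: hn1.
  - move=> t _; exact: classic.
  - move=> t _ h h'; exact: h' h.
  - move=> u t hu hTu hcvu.
    have ht : 0 <= t <= 1.
      split; [apply: (cv_ge_lim (u := u)) | apply: (cv_le_lim (u := u))] => // k; have := hu k; lra.
    have [xs Hxs] := fchoice hTu.
    have hb : forall k i, Rabs (xs k i) <= M.
      move=> k i. apply: Rle_trans (Rabs_coord _ _) _. apply: hM. by have [_ h] := Hxs k.
    have [phi [xb [hphi hcvx]]] := BWv hb.
    have hxb : Phi (xpath xi0 xi1 t) xb.
      apply: (@sol_limit n m K F K (fun k => xpath xi0 xi1 (u (phi k))) (xpath xi0 xi1 t)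
                (fun k => xs (phi k))) => //.
      - move=> k; have [h _] := Hxs (phi k); exact: h.
      - exact: (@xpath_cv _ xi0 xi1 (fun k => u (phi k)) t (cv_sub hphi hcvu)).
    exists xb; split => //.
    apply: (@comp_closure C (fun k => xs (phi k))) => //.
    + exact: Phi_SP (xpath_ri h0 h1 ht) hxb.
    + by move=> k; have [_ h] := Hxs (phi k).
  - move=> u t hu hnT hcvu hTt.
    have ht : 0 <= t <= 1.
      split; [apply: (cv_ge_lim (u := u)) | apply: (cv_le_lim (u := u))] => // k; have := hu k; lra.
    have [d [hd Hd]] := open_T hC hM h0 h1 ht hTt.
    have [N HN] := hcvu d hd. apply: (hnT N). apply: Hd; first exact: hu.
    exact: HN N (le_n N).
have [x [hx hCx]] := hT1. rewrite xpath_1 in hx.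
apply: (comp_sub hC (D := Phi xi1)) => //.
- move=> z hz; exact: Phi_SP h1 hz.
- exact: Phi_conn.
- by exists x.
Qed.

Lemma conn_union (E D : vec n -> Prop) z : connected E -> connected D -> E z -> D z ->
  connected (fun v => E v \/ D v).
Proof.
move=> hE hD hEz hDz [U [V [hU [hV [hcov [[a [ha hUa]] [[b [hb hVb]] hdis]]]]]]].
have gen : forall W W', is_open W -> is_open W' -> W z -> (exists v, (E v \/ D v) /\ W' v) ->
    (forall v, E v \/ D v -> W v \/ W' v) ->
    (forall v, E v \/ D v -> W v -> W' v -> False) -> False.
  move=> W W' hW hW' hWz [w [hw hW'w]] hc hd. case: hw => hw.
  - apply: hE. exists W, W'. split => //; split => //; split.
      move=> v hv; exact: hc v (or_introl hv).
    split; first by exists z. split; first by exists w.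
    move=> v hv; exact: hd v (or_introl hv).
  - apply: hD. exists W, W'. split => //; split => //; split.
      move=> v hv; exact: hc v (or_intror hv).
    split; first by exists z. split; first by exists w.
    move=> v hv; exact: hd v (or_intror hv).
case: (hcov z (or_introl hEz)) => hz.
- exact: (gen U V hU hV hz (ex_intro _ b (conj hb hVb)) hcov hdis).
- apply: (gen V U hV hU hz (ex_intro _ a (conj ha hUa))).
  + move=> v hv; case: (hcov v hv) => h; [right|left]; exact: h.
  + move=> v hv h1' h2'; exact: hdis v hv h2' h1'.
Qed.

Lemma part_b : vbounded (SolPr F K) -> nonempty (SolPr F K) -> connected (SolPr F K).
Proof.
move=> [M hM] [x0 hx0]. apply: NNPP => hnc.
pose C z := exists D, Defs.subset D (SolPr F K) /\ connected D /\ D x0 /\ D z.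
have hsing : connected (fun z => z = x0).
  move=> [U [V [hU [hV [hcov [[a [ha hUa]] [[b [hb hVb]] hdis]]]]]]].
  subst a b. exact: hdis x0 erefl hUa hVb.
have hC : conn_component C (SolPr F K).
  split; first by exists x0; exists (fun z => z = x0); split; [move=> z ->|].
  split.
    move=> z [D [hD [_ [_ hz]]]]; exact: hD z hz.
  split.
    move=> [U [V [hU [hV [hcov [[a [[Da [hDa [hcDa [hD0a hDaa]]]] hUa]]
       [[b [[Db [hDb [hcDb [hD0b hDbb]]]] hVb]] hdis]]]]]]].
    have hCx0 : C x0 by exists (fun z => z = x0); split; [move=> z ->|].
    have hDC : forall E, Defs.subset E (SolPr F K) -> connected E -> E x0 -> forall z, E z -> C z.
      move=> E hE hEc hE0 z hz. by exists E.
    case: (hcov x0 hCx0) => hx0W.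
    + apply hcDb. exists U, V. split => //; split => //; split.
        move=> z hz; apply: hcov; exact: hDC Db hDb hcDb hD0b z hz.
      split; first by exists x0. split; first by exists b.
      move=> z hz; apply: hdis; exact: hDC Db hDb hcDb hD0b z hz.
    + apply hcDa. exists U, V. split => //; split => //; split.
        move=> z hz; apply: hcov; exact: hDC Da hDa hcDa hD0a z hz.
      split; first by exists a. split; first by exists x0.
      move=> z hz; apply: hdis; exact: hDC Da hDa hcDa hD0a z hz.
  move=> D hDsub hDconn [z [hCz hDz]] w hDw.
  have [E [hE [hEc [hE0 hEz]]]] := hCz.
  exists (fun v => E v \/ D v). split.
    move=> v [hv|hv]; [exact: hE | exact: hDsub].
  split; first exact: (conn_union hEc hDconn hEz hDz).
  split; [by left | by right].
apply: (part_a hnc hC). exists M => z hz. apply: hM. have [_ [hsub _]] := hC. exact: hsub.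
Qed.

End Main.


Theorem theorem4 (n m : nat) (K : vec n -> Prop) (F : 'I_m -> vec n -> vec n)
  (hKne : nonempty K) (hKcl : is_closed K) (hKcv : is_convex K)
  (hFc : forall l, continuous_on K (F l))
  (hmon : monotone_VVI K F) :
  (~ connected (SolPr F K) ->
     forall C, conn_component C (SolPr F K) -> ~ vbounded C) /\
  (vbounded (SolPr F K) -> nonempty (SolPr F K) -> connected (SolPr F K)).
Proof.
have hcl := closed_sclosed hKcl.
split.
- exact: (part_a hcl hKcv hFc hmon).
- exact: (part_b hcl hKcv hFc hmon).
Qed.
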